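(* Let $U$ and $V$ be real vector spaces and let $f:V^m\to\mathbb{R}\oplus U$ be an $m$-linear map. Assume there exist $x_1,\dots,x_m,y_1,\dots,y_m\in V$ such that $f(x_1,\dots,x_m)\in\mathbb{R}\setminus\{0\}$ and $f(y_1,\dots,y_m)\notin\mathbb{R}$. Then there exist an index $i\in\{1,\dots,m\}$ and vectors $r_1,\dots,r_m,r_i^*\in V$ such that \[ f(r_1,\dots,r_m)=1\quad\text{and}\quad f(r_1,\dots,r_{i-1},r_i^*,r_{i+1},\dots,r_m)\notin\mathbb{R}. \]
   Context: $\mathbb{R}$ is identified with the summand $\mathbb{R}\oplus 0\subseteq\mathbb{R}\oplus U$. *)

(* Defs.v *)
From HB Require Import structures.
From mathcomp Require Import all_boot all_order all_algebra.
From mathcomp Require Export reals.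
Set Implicit Arguments. Unset Strict Implicit. Unset Printing Implicit Defensive.
Import Order.TTheory GRing.Theory Num.Theory.
Local Open Scope ring_scope.

Definition upd (V : Type) (m : nat) (x : {ffun 'I_m -> V}) (i : 'I_m) (v : V)
  : {ffun 'I_m -> V} := [ffun j => if j == i then v else x j].

Definition multilinear (R : realType) (V W : lmodType R) (m : nat)
  (f : {ffun 'I_m -> V} -> W) : Prop :=
  forall (x : {ffun 'I_m -> V}) (i : 'I_m) (a : R) (u v : V),
    f (upd x i (a *: u + v)) = a *: f (upd x i u) + f (upd x i v).

(* The direct sum R (+) U, with R identified with R (+) 0. *)
Definition dsum (R : realType) (U : lmodType R) := (R^o * U)%type.

Definition in_R (R : realType) (U : lmodType R) (w : dsum U) : Prop := w.2 = 0.

(* Main.v *)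
Require Import Defs.
From mathcomp Require Import all_boot all_order all_algebra.
From Stdlib Require Import Classical.
Import GRing.Theory Num.Theory.
Local Open Scope ring_scope.

Lemma upd_id (V : Type) (m : nat) (x : {ffun 'I_m -> V}) i : upd x i (x i) = x.
Proof. by apply/ffunP => j; rewrite ffunE; case: eqP => // ->. Qed.

Lemma upd_upd (V : Type) (m : nat) (x : {ffun 'I_m -> V}) i a b :
  upd (upd x i a) i b = upd x i b.
Proof. by apply/ffunP => j; rewrite !ffunE; case: eqP. Qed.

Lemma upd_eq (V : Type) (m : nat) (x : {ffun 'I_m -> V}) i a : upd x i a i = a.
Proof. by rewrite ffunE eqxx. Qed.

Lemma ml0 (R : realType) (U V : lmodType R) (m : nat)
  (f : {ffun 'I_m -> V} -> dsum U) : multilinear f ->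
  forall x i, f (upd x i 0) = 0.
Proof.
move=> Hf x i; have := Hf x i 1 0 0; rewrite scale1r addr0 scale1r.
by move=> h; apply: (addrI (f (upd x i 0))); rewrite -h addr0.
Qed.

Theorem mainTheorem11 (R : realType) (U V : lmodType R) (m : nat)
  (f : {ffun 'I_m -> V} -> dsum U) :
  multilinear f ->
  (exists x : {ffun 'I_m -> V}, in_R (f x) /\ (f x).1 <> 0) ->
  (exists y : {ffun 'I_m -> V}, ~ in_R (f y)) ->
  exists (i : 'I_m) (r : {ffun 'I_m -> V}) (rstar : V),
    f r = ((1 : R), (0 : U)) /\ ~ in_R (f (upd r i rstar)).
Proof.
move=> Hf [x [Hx1 Hx2]] [y Hy].
apply: NNPP => Hn.
have H0 : forall r i v, f r = ((1 : R), (0 : U)) -> in_R (f (upd r i v)).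
  move=> r i v Hr; apply: NNPP => Hv; apply: Hn; by exists i, r, v.
have H1 : forall w i v, in_R (f w) -> (f w).1 <> 0 -> in_R (f (upd w i v)).
  move=> w i v Hw1 Hw2.
  rewrite -(@upd_upd _ _ w i ((f w).1^-1 *: w i)); apply: H0.
  have := Hf w i ((f w).1^-1) (w i) 0; rewrite addr0 => ->.
  rewrite ml0 // addr0 upd_id.
  case: (f w) Hw1 Hw2 => [c u]; rewrite /in_R /= => -> Hc.
  congr (_, _); last by rewrite scaler0.
  by rewrite /GRing.scale /= mulVf //; apply/eqP.
have inRD : forall (a : R) (p q : dsum U), in_R p -> in_R q -> in_R (a *: p + q).
  by move=> a [p1 p2] [q1 q2]; rewrite /in_R /= => -> ->; rewrite scaler0 addr0.
have Q : forall k, (k <= m)%N -> forall w, in_R (f w) -> (f w).1 <> 0 ->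
    forall z : {ffun 'I_m -> V}, (forall j : 'I_m, (k <= j)%N -> z j = w j) ->
    in_R (f z).
  elim=> [|k IH] km w Hw1 Hw2 z Hz.
    by have -> : z = w by apply/ffunP => j; apply: Hz.
  pose kk := Ordinal km.
  pose M := upd z kk (w kk).
  have HM : forall j : 'I_m, (k <= j)%N -> M j = w j.
    move=> j kj; rewrite /M ffunE; case: eqP => [->//|/eqP nj]; apply: Hz.
    by rewrite ltn_neqAle kj andbT; apply: contra nj => /eqP h; apply/eqP/val_inj.
  have Hu := H1 w kk (z kk) Hw1 Hw2.
  set a := (f (upd w kk (z kk))).1.
  set c := (f w).1.
  pose t := (1 - a) / c.
  have Hu' : f (upd w kk (t *: w kk + z kk)) = ((1 : R), (0 : U)).
    rewrite Hf upd_id.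
    have Ew : f w = (c, 0) by rewrite /c; case: (f w) Hw1 => ? ?; rewrite /in_R /= => ->.
    have Eu : f (upd w kk (z kk)) = (a, 0) by rewrite /a; case: (f _) Hu => ? ?; rewrite /in_R /= => ->.
    rewrite Ew Eu; congr (_, _); last by rewrite /= scaler0 addr0.
    rewrite /= /t.
    have -> : forall r s : R, r *: (s : R^o) = r * s by [].
    rewrite -mulrA mulVf ?mulr1 ?subrK //; exact/eqP.
  have A1 : in_R (f (upd M kk (t *: w kk + z kk))).
    apply: (IH (ltnW km) (upd w kk (t *: w kk + z kk))) => [||j kj].
    - by rewrite Hu'.
    - by rewrite Hu' /= => /eqP; rewrite oner_eq0.
    by move: (HM j kj); rewrite /M !ffunE; case: eqP.
  have A2 : in_R (f M) by apply: (IH (ltnW km) w Hw1 Hw2).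
  move: A1; rewrite Hf /M !upd_upd upd_id -/M => A1.
  have -> : f z = (- t) *: f M + (t *: f M + f z) by rewrite addrA -scalerDl addNr scale0r add0r.
  by apply: inRD.
by apply: Hy; apply: (Q m (leqnn m) x Hx1 Hx2) => j; rewrite leqNgt ltn_ord.
Qed.
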